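(* Let $\mathcal{E}$ be an even Dirichlet form on $L^2(X,m)$ and let $\mathfrak{D}$ be its Dirichlet space. Assume that the embedding $\mathfrak{D}\hookrightarrow L^2(X,m)$ is compact and that, for $f\in L^2(X,m)$, $\mathcal{E}(f)=0$ holds if and only if $f=0$. Then $\mathfrak{D}$ satisfies a Poincaré inequality: there is a constant $C>0$ such that $\|f\|_{\mathfrak{D}}\le C\,|f|_{\mathfrak{D}}$ for all $f\in\mathfrak{D}$ (equivalently, there is $C>0$ with $\|f\|_{L^2(X,m)}\le C\,|f|_{\mathfrak{D}}$ for all $f\in\mathfrak{D}$).
   Context: Standing setting: $X$ is a Hausdorff topological space and $m$ is a Borel measure on $X$ with full support, i.e. no nonempty open subset of $X$ has $m$-measure zero. $L^2(X,m)$ is the real $L^2$ space. A Dirichlet form is a functional $\mathcal{E}:L^2(X,m)\to[0,\infty]$ that is convex, lower semicontinuous and densely defined (its effective domain $\mathrm{dom}(\mathcal{E})=\{u:\mathcal{E}(u)<\infty\}$ is dense in $L^2(X,m)$), and such that for all $u,v\in L^2(X,m)$ and $\alpha>0$: (1) $\mathcal{E}(u\wedge v)+\mathcal{E}(u\vee v)\le \mathcal{E}(u)+\mathcal{E}(v)$; (2) $\mathcal{E}\big(v+\tfrac12((u-v+\alpha)_+-(u-v-\alpha)_-)\big)+\mathcal{E}\big(u-\tfrac12((u-v+\alpha)_+-(u-v-\alpha)_-)\big)\le \mathcal{E}(u)+\mathcal{E}(v)$, where $(\cdot)_+$, $(\cdot)_-$ denote positive and negative parts. $\mathcal{E}$ is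 called even if $\mathcal{E}(0)=0$ and $\mathcal{E}(-u)=\mathcal{E}(u)$ for all $u$. Set $\mathcal{E}_1(u)=\|u\|_{L^2(X,m)}^2+\mathcal{E}(u)$. The Dirichlet space is $\mathfrak{D}=\{u\in L^2(X,m):\exists\lambda>0,\ \mathcal{E}_1(\lambda u)<\infty\}$ with the Minkowski norm $\|u\|_{\mathfrak{D}}=\inf\{\lambda>0:\mathcal{E}_1(u/\lambda)\le 1\}$ and the seminorm $|u|_{\mathfrak{D}}=\inf\{\lambda>0:\mathcal{E}(u/\lambda)\le 1\}$. *)

(* Defs.v *)
From HB Require Import structures.
From mathcomp Require Import all_boot all_order all_algebra.
From mathcomp Require Import all_classical all_reals all_analysis.
Set Implicit Arguments. Unset Strict Implicit. Unset Printing Implicit Defensive.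
Import Order.TTheory GRing.Theory Num.Def Num.Theory.
Import numFieldNormedType.Exports.
Local Open Scope classical_set_scope.
Local Open Scope ring_scope.

Notation Borel X := (g_sigma_algebraType (@open X)).

Section Dirichlet.
Context (X : ptopologicalType) (R : realType).
Variable m : {measure set (Borel X) -> \bar R}.

Definition full_support := forall U : set X, open U -> U !=set0 -> m U != 0%E.

(* L^2(X,m) is represented by its (measurable, square integrable)
   representatives; two representatives are identified when equal m-a.e. *)
Definition L2 : set (X -> R) := [set f | f \in Lfun m 2%:E].
Definition L2norm (f : X -> R) : R := fine ('N[m]_2%:E[EFin \o f])%E.
Definition L2eq (f g : X -> R) : Prop := f = g %[ae m].

Definition pospart (h : X -> R) : X -> R := fun x => Num.max (h x) 0.
Definition negpart (h : X -> R) : X -> R := fun x => Num.max (- h x) 0.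

Variable E : (X -> R) -> \bar R.

Definition functional_on_L2 :=
  (forall f, L2 f -> (0 <= E f)%E) /\
  (forall f g, L2 f -> L2 g -> L2eq f g -> E f = E g).

Definition convex_functional := forall f g (t : R), L2 f -> L2 g ->
  0 <= t <= 1 ->
  (E (fun x => t * f x + (1 - t) * g x)%R <= t%:E * E f + (1 - t)%:E * E g)%E.

Definition lsc_functional := forall f (a : \bar R), L2 f -> (a < E f)%E ->
  exists2 eps : R, 0 < eps &
    forall g, L2 g -> L2norm (g \- f) < eps -> (a < E g)%E.

Definition densely_defined := forall f (eps : R), L2 f -> 0 < eps ->
  exists2 g, L2 g & (E g < +oo)%E /\ L2norm (f \- g) < eps.

Definition lattice_property :=
    (forall u v, L2 u -> L2 v ->
       (E (fun x => Num.min (u x) (v x))%R + E (fun x => Num.max (u x) (v x))%R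
          <= E u + E v)%E).

Definition contraction_property :=
    (forall u v (alpha : R), L2 u -> L2 v -> 0 < alpha ->
       let w := pospart (fun x => u x - v x + alpha) \-
                negpart (fun x => u x - v x - alpha) in
       (E (fun x => v x + 2^-1 * w x)%R + E (fun x => u x - 2^-1 * w x)%R
          <= E u + E v)%E).

Definition dirichlet_form :=
  [/\ functional_on_L2, convex_functional, lsc_functional, densely_defined
    & lattice_property /\ contraction_property].

Definition even_functional :=
  E (fun _ => 0) = 0%E /\ forall u, L2 u -> E (fun x => - u x) = E u.

Definition E1 (u : X -> R) : \bar R := ((L2norm u ^+ 2)%:E + E u)%E.

Definition Dspace : set (X -> R) :=
  [set u | L2 u /\ exists2 l : R, 0 < l & (E1 (fun x => l * u x)%R < +oo)%E].

(* Minkowski norm and seminorm of the Dirichlet space *)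
Definition Dnorm (u : X -> R) : R :=
  inf [set l : R | 0 < l /\ (E1 (fun x => u x / l)%R <= 1)%E].
Definition Dseminorm (u : X -> R) : R :=
  inf [set l : R | 0 < l /\ (E (fun x => u x / l)%R <= 1)%E].

Definition compact_embedding := forall (u : nat -> X -> R) (M : R),
  (forall n, Dspace (u n)) -> (forall n, Dnorm (u n) <= M) ->
  exists (phi : nat -> nat) (f : X -> R),
    [/\ {homo phi : i j / (i < j)%N >-> (i < j)%N}, L2 f &
        (fun n => L2norm (u (phi n) \- f)) @ \oo --> 0].

End Dirichlet.

(* Main.v *)
Require Import Defs.
From HB Require Import structures.
From mathcomp Require Import all_boot all_order all_algebra.
From mathcomp Require Import all_classical all_reals all_analysis.
From mathcomp Require Import ring lra.
Import Order.TTheory GRing.Theory Num.Def Num.Theory.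
Import numFieldNormedType.Exports.
Local Open Scope classical_set_scope.
Local Open Scope ring_scope.

Section H.
Context (X : ptopologicalType) (R : realType)
    (m : {measure set (Borel X) -> \bar R}) (E : (X -> R) -> \bar R)
    (hfun : functional_on_L2 m E) (hconv : convex_functional m E)
    (hE0 : E (fun _ => 0) = 0%E).

Lemma two1 : (1 <= 2%:E :> \bar R)%E. Proof. by rewrite lee_fin ler1n. Qed.

Lemma L2_scale c f : L2 m f -> L2 m (fun x => c * f x).
Proof. rewrite /L2 /= => fP. have H := @rpredZ _ _ (hoelder_Lfun__canonical__GRing_SubmodClosed m two1) c f fP. exact H. Qed.

Lemma L2_sub f g : L2 m f -> L2 m g -> L2 m (f \- g).
Proof. rewrite /L2 /= => fP gP. exact: (@rpredB _ (hoelder_Lfun__canonical__GRing_SubmodClosed m two1) f g fP gP). Qed.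

Lemma L2_0 : L2 m (fun _ => 0).
Proof. rewrite /L2 /=. exact: (@rpred0 _ (hoelder_Lfun__canonical__GRing_SubmodClosed m two1)). Qed.


Lemma L2_fin f : L2 m f -> ('N[m]_2%:E[EFin \o f] \is a fin_num)%E.
Proof.
rewrite /L2 /= inE => /andP[_]; rewrite inE /= /finite_norm => H.
by rewrite ge0_fin_numE ?Lnorm_ge0.
Qed.

Lemma L2norm_ge0 f : 0 <= L2norm m f.
Proof. by rewrite /L2norm fine_ge0 ?Lnorm_ge0. Qed.

Lemma L2norm_scale c f : L2 m f -> L2norm m (fun x => c * f x) = `|c| * L2norm m f.
Proof.
rewrite /L2 /= => fP.
have h := LnormZ (Lfun_Sub two1 fP) c.
rewrite /L2norm; transitivity (fine (`|c|%:E * 'N[m]_2%:E[EFin \o f])%E).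
  congr fine; rewrite -h; apply: eq_Lnorm => x /=. done.
rewrite fineM //; exact: L2_fin.
Qed.

Lemma L2_meas f : L2 m f -> measurable_fun [set: Borel X] f.
Proof. by rewrite /L2 /= inE => /andP[/[!inE]/= mf _]. Qed.

Lemma L2norm_ae0 h g : L2 m h -> L2 m g -> L2eq m g (fun _ => 0) ->
  L2norm m (h \- g) = L2norm m h.
Proof.
move=> /L2_meas mh /L2_meas mg g0.
rewrite /L2norm; congr fine; rewrite unlock /Lnorm; congr (_ `^ _)%E.
transitivity (\int[m]_x ((`|h x - g x| `^ 2)%:E))%E.
  by apply: eq_integral => x _ /=.
transitivity (\int[m]_x ((`|h x| `^ 2)%:E))%E; last first.
  by apply: eq_integral => x _ /=.
apply: ae_eq_integral => //.
- apply/measurable_realfun.measurable_EFinP.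
  apply: (@measurableT_comp _ _ _ _ _ _ (@powR R ^~ 2)); first exact: measurable_realfun.measurable_powR.
  apply: measurableT_comp => //. exact: measurable_realfun.measurable_funB.
- apply/measurable_realfun.measurable_EFinP.
  apply: (@measurableT_comp _ _ _ _ _ _ (@powR R ^~ 2)); first exact: measurable_realfun.measurable_powR.
  exact: measurableT_comp.
- move: g0; rewrite /L2eq. apply: (@filterS _ _ (ae_filter_ringOfSetsType m)) => x /= H _. by rewrite H // subr0.
Qed.


Lemma E_ge0 f : L2 m f -> (0 <= E f)%E.
Proof. exact: hfun.1. Qed.

Lemma E_scale (t : R) u : 0 <= t <= 1 -> L2 m u ->
  (E (fun x => (t * u x)%R) <= t%:E * E u)%E.
Proof.
move=> t01 uL.
have := hconv u (fun _ => 0) t uL L2_0 t01.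
rewrite hE0 mule0 adde0.
have -> : (fun x => t * u x + (1 - t) * 0) = (fun x => t * u x).
  by apply/funext => x; rewrite mulr0 addr0.
by [].
Qed.

Lemma E1_scale (t : R) u : 0 <= t <= 1 -> L2 m u ->
  (E1 m E (fun x => (t * u x)%R) <= t%:E * E1 m E u)%E.
Proof.
move=> /andP[t0 t1] uL.
rewrite /E1 ge0_muleDr ?lee_fin ?sqr_ge0 ?E_ge0 //.
apply: leeD; last by apply: E_scale => //; rewrite t0 t1.
rewrite L2norm_scale // ger0_norm // -EFinM lee_fin exprMn.
rewrite ler_wpM2r ?sqr_ge0 //.
by rewrite expr2 -[leRHS]mulr1 ler_wpM2l.
Qed.

Lemma E1_ge0 u : L2 m u -> (0 <= E1 m E u)%E.
Proof. by move=> uL; rewrite /E1 adde_ge0 ?lee_fin ?sqr_ge0 ?E_ge0. Qed.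

Lemma E_le_E1 u : L2 m u -> (E u <= E1 m E u)%E.
Proof. by move=> uL; rewrite /E1 leeDr ?lee_fin ?sqr_ge0. Qed.


Definition S1 (f : X -> R) := [set l : R | 0 < l /\ (E1 m E (fun x => (f x / l)%R) <= 1)%E].
Definition S0 (f : X -> R) := [set l : R | 0 < l /\ (E (fun x => (f x / l)%R) <= 1)%E].

Lemma DnormE (f : X -> R) : Dnorm m E f = inf (S1 f). Proof. by []. Qed.
Lemma DseminormE (f : X -> R) : Dseminorm E f = inf (S0 f). Proof. by []. Qed.

Lemma L2_div (f : X -> R) l : L2 m f -> L2 m (fun x => f x / l).
Proof.
move=> fL; have -> : (fun x => f x / l) = (fun x => l^-1 * f x).
  by apply/funext => x; rewrite mulrC.
exact: L2_scale.
Qed.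

Lemma div_scale (f : X -> R) (l k : R) : 0 < l -> 0 < k ->
  (fun x => f x / k) = (fun x => (l / k) * (f x / l)).
Proof.
move=> l0 k0; apply/funext => x.
by field; rewrite ?gt_eqF.
Qed.

Lemma S1_up (f : X -> R) l k : L2 m f -> S1 f l -> l <= k -> S1 f k.
Proof.
move=> fL [l0 Hl] lk; have k0 : 0 < k by apply: lt_le_trans lk.
split => //; rewrite (@div_scale f l k l0 k0).
apply: le_trans; first apply: E1_scale.
- by rewrite divr_ge0 ?(ltW l0) ?(ltW k0) //= ler_pdivrMr // mul1r.
- exact: L2_div.
apply: le_trans Hl; apply: gee_pMl => //.
- by apply: E1_ge0; exact: L2_div.
- by rewrite lee_fin ler_pdivrMr // mul1r.
Qed.

Lemma S0_up (f : X -> R) l k : L2 m f -> S0 f l -> l <= k -> S0 f k.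
Proof.
move=> fL [l0 Hl] lk; have k0 : 0 < k by apply: lt_le_trans lk.
split => //; rewrite (@div_scale f l k l0 k0).
apply: le_trans; first apply: E_scale.
- by rewrite divr_ge0 ?(ltW l0) ?(ltW k0) //= ler_pdivrMr // mul1r.
- exact: L2_div.
apply: le_trans Hl; apply: gee_pMl => //.
- by apply: E_ge0; exact: L2_div.
- by rewrite lee_fin ler_pdivrMr // mul1r.
Qed.

Lemma S1_S0 (f : X -> R) l : L2 m f -> S1 f l -> S0 f l.
Proof.
move=> fL [l0 Hl]; split => //; apply: le_trans Hl.
by apply: E_le_E1; exact: L2_div.
Qed.

Lemma inf_le_el (S : set R) l : S `<=` [set x | 0 < x] -> S l -> inf S <= l.
Proof.
move=> Sp Sl; apply: ge_inf => //; exists 0 => x /Sp /ltW.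
by [].
Qed.

Lemma inf_ge0 (S : set R) : S `<=` [set x | 0 < x] -> 0 <= inf S.
Proof.
move=> Sp; case: (pselect (S !=set0)) => [Sn|Sn].
  by apply: lb_le_inf => // x /Sp /ltW.
have -> : S = set0 by apply/seteqP; split => x // Sx; apply: Sn; exists x.
by rewrite inf0.
Qed.

Lemma S1_pos (f : X -> R) : S1 f `<=` [set x | 0 < x]. Proof. by move=> x []. Qed.
Lemma S0_pos (f : X -> R) : S0 f `<=` [set x | 0 < x]. Proof. by move=> x []. Qed.

Lemma Dspace_S1 (f : X -> R) : Dspace m E f -> S1 f !=set0.
Proof.
move=> [fL [l0 l0p H]].
set v := (fun x => l0 * f x).
have vL : L2 m v by exact: L2_scale.
have fin : E1 m E v \is a fin_num.
  by rewrite ge0_fin_numE // E1_ge0.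
set r := fine (E1 m E v).
have r0 : 0 <= r by rewrite fine_ge0 // E1_ge0.
set t := (r + 1)^-1.
have t0 : 0 < t by rewrite invr_gt0 ltr_wpDl.
have t1 : t <= 1 by rewrite invf_le1 ?ler_wpDl // ltr_wpDl.
exists (t * l0)^-1; split; first by rewrite invr_gt0 mulr_gt0.
have -> : (fun x => f x / (t * l0)^-1) = (fun x => t * v x).
  by apply/funext => x; rewrite invrK /v; field.
apply: le_trans; first (apply: E1_scale => //; by rewrite (ltW t0) t1).
rewrite -(fineK fin) -/r -EFinM lee_fin /t.
rewrite mulrC ler_pdivrMr ?ltr_wpDl // mul1r. lra.
Qed.

Lemma S1_Dspace (f : X -> R) l : L2 m f -> S1 f l -> Dspace m E f.
Proof.
move=> fL [l0 Hl]; split => //; exists l^-1; first by rewrite invr_gt0.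
have -> : (fun x => l^-1 * f x) = (fun x => f x / l) by apply/funext => x; rewrite mulrC.
by apply: le_lt_trans Hl _; rewrite ltry.
Qed.


Lemma phi_ge (phi : nat -> nat) : {homo phi : i j / (i < j)%N >-> (i < j)%N} ->
  forall n, (n <= phi n)%N.
Proof.
move=> inc; elim => [|n IH] //.
have := inc n n.+1 (ltnSn n). move=> h. exact: leq_ltn_trans IH h.
Qed.

Lemma main_aux (hlsc : lsc_functional m E) (hcomp : compact_embedding m E)
  (h0 : forall f, L2 m f -> (E f = 0%E <-> L2eq m f (fun _ => 0))) :
  exists2 C : R, 0 < C &
    forall f, Dspace m E f -> Dnorm m E f <= C * Dseminorm E f.
Proof.
case: (pselect (exists n : nat, forall f, Dspace m E f ->
   Dnorm m E f <= n.+1%:R * Dseminorm E f)) => [[n Hn]|Hno].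
  by exists n.+1%:R.
exfalso.
have Hf : forall n : nat, exists f, Dspace m E f /\
    n.+1%:R * Dseminorm E f < Dnorm m E f.
  move=> n; apply: contrapT => Hc; apply: Hno; exists n => f Df.
  rewrite leNgt; apply/negP => Hlt; apply: Hc; exists f; split => //.
have [fs Hfs] := choice Hf.
pose d n := Dnorm m E (fs n).
have fsL n : L2 m (fs n) by case: (Hfs n) => -[].
have S0n n : S0 (fs n) !=set0.
  have [l Hl] := Dspace_S1 _ (Hfs n).1; exists l; exact: S1_S0.
have d0 n : 0 < d n.
  apply: le_lt_trans (Hfs n).2.
  by rewrite mulr_ge0 // DseminormE inf_ge0 //; exact: S0_pos.
have Hl n : exists l, S0 (fs n) l /\ l < d n / n.+1%:R.
  have [|l Sl ll] := @inf_lt _ _ (d n / n.+1%:R) (S0n n).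
    by rewrite -DseminormE ltr_pdivlMr // mulrC; exact: (Hfs n).2.
  by exists l.
have [ls Hls] := choice Hl.
pose g n := fun x => (d n)^-1 * fs n x.
pose k n := ls n / d n.
have ls0 n : 0 < ls n by case: (Hls n) => -[].
have gL n : L2 m (g n) by exact: L2_scale.
have k0 n : 0 < k n by rewrite divr_gt0.
have kb n : k n < n.+1%:R^-1.
  rewrite /k ltr_pdivrMr // mulrC.
  exact: (Hls n).2.
have Eg n (c : R) : 0 <= c -> c * k n <= 1 -> (E (fun x => (c * g n x)%R) <= (c * k n)%:E)%E.
  move=> c0 ck.
  have -> : (fun x => c * g n x) = (fun x => (c * k n) * (fs n x / ls n)).
    apply/funext => x; rewrite /g /k; field.
    by rewrite !gt_eqF //= ?d0 ?ls0.
  apply: le_trans; first (apply: E_scale; [by rewrite mulr_ge0 ?(ltW (k0 n))|exact: L2_div]).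
  rewrite -[leRHS]mule1; apply: lee_wpmul2l; first by rewrite lee_fin mulr_ge0 ?(ltW (k0 n)).
  by case: (Hls n) => -[].
have gS1 n : S1 (g n) 2.
  have [|y Sy yl] := @inf_lt _ _ (2 * d n) (Dspace_S1 _ (Hfs n).1).
    by rewrite -DnormE -/(d n) ltr_pMl // ltr1n.
  have := S1_up _ _ _ (fsL n) Sy (ltW yl) => -[_ H]; split => //.
  have -> : (fun x => (g n x / 2)) = (fun x => fs n x / (2 * d n)).
    apply/funext => x; rewrite /g; field; by rewrite gt_eqF //= ?d0 ?ls0.
  exact: H.
have gD n : Dspace m E (g n) by exact: (S1_Dspace _ _ (gL n) (gS1 n)).
have gN n : Dnorm m E (g n) <= 2 by rewrite DnormE; apply: (inf_le_el _ _ _ (gS1 n)); exact: S1_pos.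
have [phi [ginf [phiinc ginfL conv]]] := hcomp g 2 gD gN.
have Hev eps : 0 < eps -> exists n, L2norm m (g (phi n) \- ginf) < eps /\ k (phi n) < eps.
  move=> e0.
  have [N _ HN] := cvgr_dist_lt _ _ conv eps e0.
  have [M HM] : exists M : nat, eps^-1 < M%:R.
    by exists (Num.Def.archi_bound eps^-1); apply: archi_boundP; rewrite invr_ge0 ltW.
  exists (maxn N M); split.
    have := HN (maxn N M) (leq_maxl N M).
    by rewrite /= sub0r normrN ger0_norm ?L2norm_ge0.
  apply: lt_le_trans (kb _) _.
  have h1 : (M <= (phi (maxn N M)).+1)%N.
    apply: leq_trans (leq_maxr N M) _; apply: leq_trans (phi_ge _ phiinc (maxn N M)) _.
    exact: leqnSn.
  have h2 : eps^-1 < (phi (maxn N M)).+1%:R.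
    by apply: lt_le_trans HM _; rewrite ler_nat.
  by rewrite invf_ple ?posrE ?ltW // ltr0n.
have E1g n : (E (g n) <= (k n)%:E)%E.
  have kle1 : 1 * k n <= 1.
    rewrite mul1r; apply: ltW; apply: lt_le_trans (kb n) _.
    by rewrite invf_le1 ?ltr0n // ler1n.
  have H := Eg n 1 ler01 kle1.
  have e : (fun x => (1 * g n x)%R) = g n by apply/funext => x; rewrite mul1r.
  by rewrite e mul1r in H.
have Einf : E ginf = 0%E.
  apply: contrapT => Hne.
  have Epos : (0 < E ginf)%E.
    rewrite lt_neqAle eq_sym; apply/andP; split; [exact/eqP|exact: E_ge0].
  have [eps0 e00 He0] : exists2 e : R, 0 < e & (e%:E < E ginf)%E.
    move: Epos; case: (E ginf) => [r| |] //.
    - rewrite lte_fin => r0; exists (r / 2); first by rewrite divr_gt0.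
      rewrite lte_fin; lra.
    - by move=> _; exists 1 => //; rewrite ltry.
  have [eps e0 Hlsc] := hlsc ginf (eps0%:E) ginfL He0.
  have [|n [Hn1 Hn2]] := Hev (Num.min eps eps0).
    by rewrite lt_min e0 e00.
  have m1 : Num.min eps eps0 <= eps by rewrite ge_min lexx.
  have m2 : Num.min eps eps0 <= eps0 by rewrite ge_min lexx orbT.
  have H1 := Hlsc (g (phi n)) (gL _) (lt_le_trans Hn1 m1).
  have H2 := lt_le_trans H1 (E1g (phi n)).
  rewrite lte_fin in H2; have := lt_trans H2 (lt_le_trans Hn2 m2); by rewrite ltxx.
have g0 := (h0 ginf ginfL).1 Einf.
have [|n [Hn1 Hn2]] := Hev (4^-1).
  by rewrite invr_gt0 ltr0n.
set j := phi n.
have HN : L2norm m (g j) < 4^-1 by rewrite -(L2norm_ae0 _ _ (gL j) ginfL g0).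
have HN0 := L2norm_ge0 (g j).
have Hd : S1 (fs j) (d j / 2).
  split; first by rewrite divr_gt0.
  have -> : (fun x => (fs j x / (d j / 2))%R) = (fun x => 2 * g j x).
    apply/funext => x; rewrite /g; field; by rewrite gt_eqF //= ?d0.
  rewrite /E1 L2norm_scale // ger0_norm //.
  have k2 : 2 * k j <= 1 by lra.
  have H2 := Eg j 2 (ler0n R 2) k2.
  apply: le_trans; first exact: leeD2l H2.
  rewrite -EFinD lee_fin.
  nra.
have := inf_le_el _ _ (S1_pos _) Hd.
rewrite -DnormE -/(d j) => H.
have := d0 j. lra.
Qed.

End H.

Theorem mainTheorem2 (X : ptopologicalType) (R : realType)
    (m : {measure set (Borel X) -> \bar R}) (E : (X -> R) -> \bar R) :
  hausdorff_space X -> full_support m ->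
  dirichlet_form m E -> even_functional m E ->
  compact_embedding m E ->
  (forall f, L2 m f -> (E f = 0%E <-> L2eq m f (fun _ => 0))) ->
  exists2 C : R, 0 < C &
    forall f, Dspace m E f -> Dnorm m E f <= C * Dseminorm E f.
Proof.
move=> _ _ [hfun hconv hlsc _ _] [hE0 _] hcomp h0.
exact (@main_aux X R m E hfun hconv hE0 hlsc hcomp h0).
Qed.
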